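(* There exists a language which is accepted by a GLLOWJFA but not by any LOWJFA, and hence LOWJ ⊂ GLLOWJ (proper inclusion).
   Context: A left one-way jumping finite automaton (LOWJFA) is a tuple A = (Σ, Q, q_0, F, R) with alphabet Σ, finite state set Q, start state q_0, final states F ⊆ Q, and rules R ⊆ Q × Σ × Q; a rule (q,a,p) means the automaton goes from state p to state q deleting a, and for each p and a there is at most one such q. For p ∈ Q let Σ_p = {b ∈ Σ : (q,b,p) ∈ R for some q}. Configurations are strings in Σ^* Q; for (q,a,p) ∈ R, x ∈ (Σ \ Σ_p)^* and y ∈ Σ^*, the automaton moves from yaxp to xyq. The accepted language is the set of words w such that w q_0 leads in zero or more moves to q_f for some q_f ∈ F. A generalized left linear one-way jumping finite automaton (GLLOWJFA) is a tuple A = (Σ, Q, q_0, F, R) where R ⊂ Q × Σ^+ × Q is finite; a rule (q,w,p) means from p, delete w, go to q, and for each p ∈ Q and w ∈ Σ^+ there is at most one such q. For p ∈ Q let Σ_p = {w ∈ Σ^+ : (q,w,p) ∈ R for some q}. Configurations are strings in Σ^* Q Σ^*, and the moves are: (1) for t,u,v ∈ Σ^* and (q,x,p) ∈ R, the configuration vxupt moves to vqut, provided u contains no word of Σ_p as a subword and there is no nonempty prefix u_1 of u and nonempty suffix x_2 of x with x_2u_1 = x; (2) for x ∈ Σ^+ and y ∈ Σ^* such that y contains no word of Σ_p as a subword, ypx moves to yxp. The accepted language is {w ∈ Σ^* : w q_0 leads in zero or more moves to q_f for some q_f ∈ F}. LOWJ and GLLOWJ denote the classes of languages accepted by LOWJFA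 and GLLOWJFA respectively. A LOWJFA is exactly a GLLOWJFA all of whose rules delete words of length 1, so LOWJ ⊆ GLLOWJ. *)

(* Defs.v *)
From mathcomp Require Import all_boot.
Set Implicit Arguments. Unset Strict Implicit. Unset Printing Implicit Defensive.

Inductive star (C : Type) (step : C -> C -> Prop) : C -> C -> Prop :=
| star_refl c : star step c c
| star_step c1 c2 c3 : step c1 c2 -> star step c2 c3 -> star step c1 c3.

(* A rule (q, a, p) : from p, delete a, go to q. *)
Record lowjfa (Sigma : finType) := LOWJFA {
  lQ : finType;
  lq0 : lQ;
  lF : {set lQ};
  lR : {set lQ * Sigma * lQ};
  lR_det : forall (p : lQ) (a : Sigma) (q q' : lQ),
      (q, a, p) \in lR -> (q', a, p) \in lR -> q = q' }.

Definition lSigma_p (Sigma : finType) (A : lowjfa Sigma) (p : lQ A) (b : Sigma) : bool :=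
  [exists q : lQ A, (q, b, p) \in lR A].

Definition lstep (Sigma : finType) (A : lowjfa Sigma)
    (c c' : seq Sigma * lQ A) : Prop :=
  exists (q p : lQ A) (a : Sigma) (x y : seq Sigma),
    [/\ (q, a, p) \in lR A,
        all (fun b => ~~ @lSigma_p Sigma A p b) x,
        c = (y ++ a :: x, p) & c' = (x ++ y, q)].

Definition lowjfa_accepts (Sigma : finType) (A : lowjfa Sigma) (w : seq Sigma) : Prop :=
  exists qf, qf \in lF A /\ star (@lstep Sigma A) (w, lq0 A) ([::], qf).

Definition LOWJ (Sigma : finType) (L : seq Sigma -> Prop) : Prop :=
  exists A : lowjfa Sigma, forall w, L w <-> lowjfa_accepts A w.

(* Finite rule set R ⊂ Q × Σ^+ × Q given as a list; rule (q, w, p):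
   from p, delete w, go to q. *)
Record gllowjfa (Sigma : finType) := GLLOWJFA {
  gQ : finType;
  gq0 : gQ;
  gF : {set gQ};
  gR : seq (gQ * seq Sigma * gQ);
  gR_nonempty : forall q w p, (q, w, p) \in gR -> w != [::];
  gR_det : forall (p : gQ) (w : seq Sigma) (q q' : gQ),
      (q, w, p) \in gR -> (q', w, p) \in gR -> q = q' }.

Definition gSigma_p (Sigma : finType) (A : gllowjfa Sigma) (p : gQ A) (w : seq Sigma) : Prop :=
  exists q, (q, w, p) \in gR A.

Definition no_subword_of (Sigma : finType) (A : gllowjfa Sigma) (p : gQ A) (u : seq Sigma) : Prop :=
  forall w, @gSigma_p Sigma A p w -> ~~ infix w u.

(* configurations (l, p, r) represent l p r in Sigma^* Q Sigma^* *)
Definition gstep (Sigma : finType) (A : gllowjfa Sigma)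
    (c c' : seq Sigma * gQ A * seq Sigma) : Prop :=
  (exists (q p : gQ A) (x v u t : seq Sigma),
     [/\ (q, x, p) \in gR A,
         @no_subword_of Sigma A p u,
         ~ (exists u1 x2, prefix u1 u /\ u1 != [::] /\ suffix x2 x /\ x2 != [::]
                          /\ x2 ++ u1 = x),
         c = (v ++ x ++ u, p, t) & c' = (v, q, u ++ t)])
  \/
  (exists (p : gQ A) (x y : seq Sigma),
     [/\ x != [::], @no_subword_of Sigma A p y, c = (y, p, x) & c' = (y ++ x, p, [::])]).

Definition gllowjfa_accepts (Sigma : finType) (A : gllowjfa Sigma) (w : seq Sigma) : Prop :=
  exists qf, qf \in gF A /\ star (@gstep Sigma A) (w, gq0 A, [::]) ([::], qf, [::]).

Definition GLLOWJ (Sigma : finType) (L : seq Sigma -> Prop) : Prop :=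
  exists A : gllowjfa Sigma, forall w, L w <-> gllowjfa_accepts A w.

(* Main.v *)
Require Import Defs.
From mathcomp Require Import all_boot.
From Stdlib Require Import Classical.
From mathcomp Require Import zify.
Set Implicit Arguments. Unset Strict Implicit. Unset Printing Implicit Defensive.

Lemma star_trans C (R : C -> C -> Prop) a b c : star R a b -> star R b c -> star R a c.
Proof. elim=> [//|x y z Hxy _ IH] Hz; exact: star_step Hxy (IH Hz). Qed.

Lemma star1 C (R : C -> C -> Prop) a b : R a b -> star R a b.
Proof. move=> H; apply: star_step H _; exact: star_refl. Qed.

Lemma cat_split (T : eqType) (r l y x : seq T) (a : T) :
  r ++ l = y ++ a :: x ->
  (exists l1, l = l1 ++ a :: x /\ y = r ++ l1) \/
  (exists x1, r = y ++ a :: x1 /\ x = x1 ++ l).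
Proof.
elim: r y => [|c r IH] y /=.
  by move=> ->; left; exists y.
case: y => [|c' y] /=.
  by move=> [<- Hx]; right; exists r; split.
move=> [<- /IH [[l1 [-> ->]]|[x1 [-> ->]]]].
  by left; exists l1.
by right; exists x1.
Qed.

Lemma last_split (T : eqType) (P : pred T) y a x y' a' x' :
  P a -> P a' -> all (fun b => ~~ P b) x -> all (fun b => ~~ P b) x' ->
  y ++ a :: x = y' ++ a' :: x' -> [/\ y = y', a = a' & x = x'].
Proof.
move=> Pa Pa' Hx Hx'.
elim: y y' => [|c y IH] [|c' y'] /=.
- by move=> [-> ->].
- by move=> [_ Ex]; move: Hx; rewrite Ex all_cat /= Pa' /= andbF.
- by move=> [_ Ex]; move: Hx'; rewrite -Ex all_cat /= Pa /= andbF.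
- by move=> [-> /IH [-> -> ->]].
Qed.

Lemma star_inv C (R : C -> C -> Prop) a b : star R a b -> a = b \/ exists c, R a c /\ star R c b.
Proof. case=> [x|x y z H1 H2]; [by left | right; by exists y]. Qed.

Section P1.
Variables (Sigma : finType) (A : lowjfa Sigma).

Definition gRof : seq (lQ A * seq Sigma * lQ A) :=
  [seq (t.1.1, [:: t.1.2], t.2) | t <- enum (lR A)].

Lemma gRofP q w p : (q, w, p) \in gRof -> exists a, w = [:: a] /\ (q, a, p) \in lR A.
Proof.
case/mapP=> [[[q1 a] p1]] /=; rewrite mem_enum => H [-> -> ->].
by exists a.
Qed.

Lemma gRof_in q a p : (q, a, p) \in lR A -> (q, [:: a], p) \in gRof.
Proof. by move=> H; apply/mapP; exists (q, a, p); rewrite ?mem_enum. Qed.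

Lemma gRof_ne q w p : (q, w, p) \in gRof -> w != [::].
Proof. by case/gRofP=> a [-> _]. Qed.

Lemma gRof_det p w q q' : (q, w, p) \in gRof -> (q', w, p) \in gRof -> q = q'.
Proof.
case/gRofP=> a [-> H1]; case/gRofP=> a' [[<-] H2].
exact: lR_det H1 H2.
Qed.

Definition GofL : gllowjfa Sigma :=
  @GLLOWJFA Sigma (lQ A) (lq0 A) (lF A) gRof gRof_ne gRof_det.

Lemma nosub_all (p : lQ A) u :
  @no_subword_of Sigma GofL p u <-> all (fun b => ~~ @lSigma_p Sigma A p b) u.
Proof.
split.
- move=> H; apply/allP=> b Hb; apply/negP=> /existsP [q Hq].
  have := H [:: b] (ex_intro _ q (gRof_in Hq)).
  by rewrite infix1s Hb.
- move=> /allP H w [q /= /gRofP [a [-> Hq]]].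
  apply/negP=> Hin.
  have Ha : a \in u by rewrite -infix1s.
  by move: (H a Ha); rewrite /lSigma_p; case/negP; apply/existsP; exists q.
Qed.

Lemma Sig_rule (p q : lQ A) a : (q, a, p) \in lR A -> @lSigma_p Sigma A p a.
Proof. by move=> H; apply/existsP; exists q. Qed.

Lemma fwd c f : star (@lstep Sigma A) c f -> forall qf, f = ([::], qf) ->
  forall l r, r ++ l = c.1 -> star (@gstep Sigma GofL) (l, c.2, r) ([::], qf, [::]).
Proof.
elim=> [c0|c1 c2 c3 Hs _ IH] qf Ef l r.
  rewrite Ef /=; case: r => //; case: l => // _.
  exact: star_refl.
case: Hs => q [p [a [x [y [Hr Hx E1 E2]]]]].
have IH' := IH qf Ef; rewrite E2 /= in IH'.
rewrite E1 /= => /cat_split [[l1 [El Ey]]|[x1 [Er Ex]]].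
- apply: star_step (IH' l1 (x ++ r) _); last by rewrite Ey catA.
  left; exists q, p, [:: a], l1, x, r; split => //.
  + exact: gRof_in.
  + by apply/nosub_all.
  + by move=> [u1 [x2 [_ [Hu1 [_ [Hx2 /(congr1 size)]]]]]]; rewrite size_cat;
      case: u1 Hu1 => // ? ?; case: x2 Hx2 => // ? ? _ /=; rewrite addnS.
  + by rewrite El.
- move: Hx; rewrite Ex all_cat => /andP [Hx1 Hl].
  apply: star_step.
    right; exists p, r, l; split => //.
    + by rewrite Er; case: (y).
    + by apply/nosub_all.
  apply: star_step (IH' (l ++ y) (x1 ++ [::]) _); last by rewrite cats0 Ex catA.
  left; exists q, p, [:: a], (l ++ y), x1, [::]; split => //.
  + exact: gRof_in.
  + by apply/nosub_all.
  + by move=> [u1 [x2 [_ [Hu1 [_ [Hx2 /(congr1 size)]]]]]]; rewrite size_cat;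
      case: u1 Hu1 => // ? ?; case: x2 Hx2 => // ? ? _ /=; rewrite addnS.
  + by rewrite Er -catA.
Qed.

Lemma bwd c f : star (@gstep Sigma GofL) c f -> forall qf, f = ([::], qf, [::]) ->
  star (@lstep Sigma A) (c.2 ++ c.1.1, c.1.2) ([::], qf).
Proof.
elim=> [c0|c1 c2 c3 Hs _ IH] qf Ef.
  rewrite Ef /=; exact: star_refl.
have IH' := IH qf Ef.
case: Hs => [[q [p [x [v [u [t [Hr Hu _ E1 E2]]]]]]]|[p [x [y [Hx Hy E1 E2]]]]].
- rewrite E2 /= in IH'; rewrite E1 /=.
  case/gRofP: Hr => a [Exa Hr]; rewrite Exa.
  apply: star_step IH'.
  exists q, p, a, u, (t ++ v); split => //.
  + by apply/nosub_all.
  + by rewrite -catA.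
  + by rewrite catA.
- rewrite E2 /= in IH'; rewrite E1 /=.
  move/nosub_all: Hy => Hy.
  case: (star_inv IH') => [[]|[c4 [Hs Hs2]]].
    by move: Hx; case: (x) => //; case: (y).
  case: Hs => q [p' [a [x' [y' [Hr Hx' E3 E4]]]]].
  case: E3 => E3 Ep; subst p'.
  case/cat_split: E3 => [[l1 [Ex Ey']]|[x1 [Ey _]]]; last first.
    move: Hy; rewrite Ey all_cat /= (Sig_rule Hr) /= andbF //.
  apply: star_step Hs2.
  exists q, p, a, (x' ++ y), l1; split => //.
  + by rewrite all_cat Hx' Hy.
  + by rewrite Ex -catA.
  + by rewrite E4 Ey' catA.
Qed.

Lemma LOWJ_GLLOWJ_acc w : lowjfa_accepts A w <-> gllowjfa_accepts GofL w.
Proof.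
split=> [[qf [Hf Hs]]|[qf [Hf Hs]]]; exists qf; split => //.
  exact: (fwd Hs (erefl _) (l:=w) (r:=[::])).
exact: (bwd Hs (erefl _)).
Qed.
End P1.


Definition gR2 : seq (unit * seq bool * unit) := [:: (tt, [:: true; false], tt)].

Lemma gR2_ne q w p : (q, w, p) \in gR2 -> w != [::].
Proof. by rewrite inE => /eqP [_ -> _]. Qed.

Lemma gR2_det (p : unit) (w : seq bool) (q q' : unit) :
  (q, w, p) \in gR2 -> (q', w, p) \in gR2 -> q = q'.
Proof. by case: q; case: q'. Qed.

Definition G2 : gllowjfa bool :=
  @GLLOWJFA bool unit tt setT gR2 gR2_ne gR2_det.

Definition L2 := gllowjfa_accepts G2.

Lemma G2_rule q x p : (q, x, p) \in gR G2 -> x = [:: true; false].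
Proof. by rewrite inE => /eqP [_ -> _]. Qed.

Lemma G2_head c f : star (@gstep bool G2) c f ->
  (exists l', c.1.1 = false :: l') -> exists l', f.1.1 = false :: l'.
Proof.
elim=> [//|c1 c2 c3 Hs _ IH] H; apply: IH.
case: Hs => [[q [p [x [v [u [t [Hr _ _ E1 E2]]]]]]]|[p [x [y [_ _ E1 E2]]]]].
- rewrite E2 /=; move: H; rewrite E1 (G2_rule Hr) /=.
  by case: v {E1 E2} => [|b v] /= [l' //] [-> _]; exists v.
- by rewrite E2 /=; move: H; rewrite E1 /= => [[l' ->]]; exists (l' ++ x).
Qed.

Definition cdiff (c : seq bool * gQ G2 * seq bool) :=
  count_mem true (c.1.1 ++ c.2) == count_mem false (c.1.1 ++ c.2).

Lemma G2_count c f : star (@gstep bool G2) c f -> cdiff c = cdiff f.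
Proof.
elim=> [//|c1 c2 c3 Hs _ IH]; rewrite -IH.
case: Hs => [[q [p [x [v [u [t [Hr _ _ E1 E2]]]]]]]|[p [x [y [_ _ E1 E2]]]]].
- rewrite E1 E2 /cdiff /= (G2_rule Hr) !count_cat /=.
  by apply/eqP/eqP; lia.
- by rewrite E1 E2 /cdiff /= cats0.
Qed.

Lemma nseqS_r T n (x : T) : nseq n.+1 x = nseq n x ++ [:: x].
Proof. by elim: n => //= n ->. Qed.

Lemma nseq_rot T n (x : T) s : x :: nseq n x ++ s = nseq n x ++ x :: s.
Proof. by elim: n => //= n <-. Qed.

Lemma G2_acc n : L2 (nseq n true ++ nseq n false).
Proof.
exists tt; split; first exact: in_setT.
elim: n => [|n IH]; first exact: star_refl.
case: n IH => [|n] IH.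
  apply: star1; left; exists tt, tt, [:: true; false], [::], [::], [::]; split => //.
  - by move=> w [q] /G2_rule ->.
  - by move=> [[|? ?] [x2 [H [H2 _]]]].
apply: star_step; last apply: star_step; last exact: IH.
  left; exists tt, tt, [:: true; false], (nseq n.+1 true), (nseq n.+1 false), [::].
  split => //.
  - move=> w [q] /G2_rule ->.
    apply/negP => /infixP [s1 [s2 E]].
    have : true \in nseq n.+1 false by rewrite E !mem_cat !inE !orbT.
    by rewrite mem_nseq.
  - move=> [u1 [x2 [Hp [Hu1 [Hs [Hx2 E]]]]]].
    move: E Hs Hx2 Hu1; case: x2 => [//|b [|b' x2]] /=.
      by move=> [<- _]; case: b.
    by move=> [_ _]; case: x2 => [|? ?] //= -> _ _.
  - by rewrite [nseq n.+2 true]nseqS_r -catA.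
right; exists tt, (nseq n.+1 false), (nseq n.+1 true); split => //.
move=> w [q] /G2_rule ->.
apply/negP => /infixP [s1 [s2 E]].
have : false \in nseq n.+1 true by rewrite E !mem_cat !inE !orbT.
by rewrite mem_nseq.
by rewrite cats0.
Qed.

Section NotL.
Variable B : lowjfa bool.

Definition stepa (p : lQ B) : option (lQ B) := [pick q | (q, false, p) \in lR B].

Fixpoint ra (k : nat) : option (lQ B) :=
  if k is k'.+1 then (if ra k' is Some p then stepa p else None) else Some (lq0 B).

Lemma lstep_det c c1 c2 : @lstep bool B c c1 -> @lstep bool B c c2 -> c1 = c2.
Proof.
move=> [q [p [a [x [y [Hr Hx E1 E2]]]]]] [q' [p' [a' [x' [y' [Hr' Hx' E1' E2']]]]]].
rewrite E1 in E1'; case: E1' => E Ep; subst p'.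
have Pa : @lSigma_p bool B p a by apply/existsP; exists q.
have Pa' : @lSigma_p bool B p a' by apply/existsP; exists q'.
case: (last_split Pa Pa' Hx Hx' E) => Ey Ea Ex.
rewrite E2 E2' Ey Ex; congr (_, _).
by apply: lR_det Hr _; rewrite Ea.
Qed.

Lemma term q c : ~ @lstep bool B ([::], q) c.
Proof. by move=> [q' [p [a [x [y [_ _ E _]]]]]]; case: y E. Qed.

Lemma star_det c c' qf : star (@lstep bool B) c ([::], qf) ->
  star (@lstep bool B) c c' -> star (@lstep bool B) c' ([::], qf).
Proof.
move=> Hf Hc; elim: Hc Hf => [//|c1 c2 c3 H12 _ IH] Hf.
apply: IH; case: (star_inv Hf) => [E|[c4 [H14 H4]]].
  by subst; case: (term H12).
by rewrite (lstep_det H12 H14).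
Qed.

Lemma run_a k r y m : ra k = Some r ->
  star (@lstep bool B) (y ++ nseq (k + m) false, lq0 B) (y ++ nseq m false, r).
Proof.
elim: k r m => [|k IH] r m /=.
  by move=> [<-]; rewrite add0n; exact: star_refl.
case E: (ra k) => [p|] // Hp.
have H := IH _ m.+1 E; rewrite addnS in H; rewrite ?addSn; apply: star_trans H _.
apply: star1; exists r, p, false, [::], (y ++ nseq m false); split => //.
- by move: Hp; rewrite /stepa; case: pickP => // q Hq [<-].
- by rewrite nseqS_r catA.
Qed.

Lemma notB : ~ (forall w, L2 w <-> lowjfa_accepts B w).
Proof.
move=> HB.
case: (classic (exists s r, ra s = Some r /\ stepa r = None)) => [[s [r [Hs Hr]]]|Hcyc].
- have [qf [Hqf Hst]] := (HB _).1 (G2_acc s.+2).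
  have H1 : star (@lstep bool B) (nseq s.+2 true ++ nseq s.+2 false, lq0 B)
                 (nseq s.+2 true ++ nseq 2 false, r).
    by have := run_a (nseq s.+2 true) 2 Hs; rewrite addn2.
  have H1f := star_det Hst H1.
  have Hnf : forall q, (q, false, r) \notin lR B.
    move=> q; apply/negP=> Hq; move: Hr; rewrite /stepa.
    by case: pickP => // /(_ q); rewrite Hq.
  have [q Hq] : exists q, (q, true, r) \in lR B.
    case: (star_inv H1f) => [E|[c' [Hc' _]]]; first by case: E.
    case: Hc' => q [p [a [x [y [Hr' _ E1 _]]]]].
    case: E1 => _ Ep; subst p.
    case: a Hr' => Hr'; first by exists q.
    by move: (Hnf q); rewrite Hr'.
  have HsigF : ~~ @lSigma_p bool B r false.
    by apply/existsP => [[q' Hq']]; move: (Hnf q'); rewrite Hq'.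
  have HT1 : @lstep bool B (nseq s.+2 true ++ nseq 2 false, r)
                           (nseq 2 false ++ nseq s.+1 true, q).
    exists q, r, true, (nseq 2 false), (nseq s.+1 true); split => //=.
    - by rewrite HsigF.
    - by rewrite nseq_rot.
  have HTf := star_det H1f (star1 HT1).
  have H2 : star (@lstep bool B) (false :: nseq s.+2 true ++ nseq s.+1 false, lq0 B)
                 (false :: nseq s.+2 true ++ nseq 1 false, r).
    by have := run_a (false :: nseq s.+2 true) 1 Hs; rewrite addn1.
  have HT2 : @lstep bool B (false :: nseq s.+2 true ++ nseq 1 false, r)
                           (nseq 2 false ++ nseq s.+1 true, q).
    exists q, r, true, (nseq 1 false), (false :: nseq s.+1 true); split => //=.
    - by rewrite HsigF.
    - by rewrite nseq_rot.
  have [qf' [_ Hs']] := (HB (false :: nseq s.+2 true ++ nseq s.+1 false)).2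
    (ex_intro _ qf (conj Hqf (star_trans H2 (star_step HT2 HTf)))).
  by have [l' //] := G2_head Hs' (ex_intro _ _ (erefl _)).
- have Hall : forall k, exists r, ra k = Some r.
    elim=> [|k [r IH]]; first by exists (lq0 B).
    rewrite /= IH; case E: (stepa r) => [r'|]; first by exists r'.
    by exfalso; apply: Hcyc; exists k, r.
  have key : forall x y, x < y -> ra x = ra y -> False.
    move=> x y Hxy Exy.
    have [r Hr] := Hall x.
    have [qf [Hqf Hst]] := (HB _).1 (G2_acc x).
    have H1 := run_a (nseq x true) 0 Hr; rewrite addn0 in H1.
    have H1f := star_det Hst H1.
    have H3 := run_a (nseq x true) 0 (etrans (esym Exy) Hr); rewrite addn0 in H3.
    have [qf' [_ Hs']] := (HB (nseq x true ++ nseq y false)).2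
      (ex_intro _ qf (conj Hqf (star_trans H3 H1f))).
    have := G2_count Hs'; rewrite /cdiff /= !cats0 !count_cat !count_nseq /=.
    by rewrite !mul1n !mul0n addn0 add0n (ltn_eqF Hxy).
  pose f (i : 'I_(#|lQ B|.+1)) := odflt (lq0 B) (ra i).
  have : ~~ injectiveb f.
    apply/negP => /injectiveP Hinj; have := leq_card f Hinj.
    by rewrite card_ord ltnn.
  case/injectivePn => i [j Hij Efij].
  have Eij : ra i = ra j.
    have [ri Hri] := Hall i; have [rj Hrj] := Hall j.
    by move: Efij; rewrite /f Hri Hrj /= => ->.
  case: (ltngtP i j) => H.
  + exact: key H Eij.
  + exact: key H (esym Eij).
  + by move: Hij; rewrite (val_inj H) eqxx.
Qed.
End NotL.

Lemma part2 : exists (Sigma : finType) (L : seq Sigma -> Prop), GLLOWJ L /\ ~ LOWJ L.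
Proof.
exists bool, L2; split; first by exists G2.
by move=> [B HB]; exact: notB HB.
Qed.


Theorem lemma3 :
  (forall (Sigma : finType) (L : seq Sigma -> Prop), LOWJ L -> GLLOWJ L) /\
  (exists (Sigma : finType) (L : seq Sigma -> Prop), GLLOWJ L /\ ~ LOWJ L).
Proof.
split; last exact: part2.
move=> Sigma L [A HA]; exists (GofL A) => w.
by rewrite HA LOWJ_GLLOWJ_acc.
Qed.
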